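(* Let $(\mathfrak{A},\mathfrak{A}_0)$ be a $*$-semisimple Banach quasi $*$-algebra such that $\mathfrak{A}[\tau_w]$ is sequentially complete. Let $\delta$ be a closable qu*-derivation of $(\mathfrak{A},\mathfrak{A}_0)$ with closure $\overline{\delta}$. If $a,b\in\mathcal{D}(\overline{\delta})$ and $a\,\square\, b$ is well defined, then there exists an element $\overline{\delta}_w(a\,\square\, b)\in\mathfrak{A}$ such that $$\varphi(\overline{\delta}_w(a\,\square\, b)u,v)=\varphi(bu,\overline{\delta}(a)^*v)+\varphi(\overline{\delta}(b)u,a^*v)$$ for all $u,v\in\mathfrak{A}_0$ and all $\varphi\in\mathcal{S}_{\mathfrak{A}_0}(\mathfrak{A})$.
   Context: A quasi $*$-algebra $(\mathfrak{A},\mathfrak{A}_0)$ consists of a vector space $\mathfrak{A}$ and a $*$-algebra $\mathfrak{A}_0\subseteq\mathfrak{A}$ such that $\mathfrak{A}$ carries an involution extending that of $\mathfrak{A}_0$, $\mathfrak{A}$ is an $\mathfrak{A}_0$-bimodule whose module multiplications extend the multiplication of $\mathfrak{A}_0$ with $(xa)y=x(ay)$, $a(xy)=(ax)y$ for $a\in\mathfrak{A}$, $x,y\in\mathfrak{A}_0$, and $(ax)^*=x^*a^*$. It is a Banach quasi $*$-algebra if $\mathfrak{A}$ is a Banach space with norm $\|\cdot\|$ such that $\|a^*\|=\|a\|$, $\mathfrak{A}_0$ is dense in $\mathfrak{A}$, and for each $x\in\mathfrak{A}_0$ the map $a\mapsto ax$ is continuous on $\mathfrak{A}$. Let $\mathcal{S}_{\mathfrak{A}_0}(\mathfrak{A})$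 be the set of sesquilinear forms $\varphi$ on $\mathfrak{A}\times\mathfrak{A}$ with $\varphi(a,a)\ge 0$, $\varphi(ax,y)=\varphi(x,a^*y)$ for $a\in\mathfrak{A}$, $x,y\in\mathfrak{A}_0$, and $|\varphi(a,b)|\le\|a\|\|b\|$ for all $a,b\in\mathfrak{A}$. The Banach quasi $*$-algebra is $*$-semisimple if $\varphi(a,a)=0$ for all $\varphi\in\mathcal{S}_{\mathfrak{A}_0}(\mathfrak{A})$ implies $a=0$. The topology $\tau_w$ on $\mathfrak{A}$ is generated by the seminorms $a\mapsto|\varphi(ax,y)|$, $\varphi\in\mathcal{S}_{\mathfrak{A}_0}(\mathfrak{A})$, $x,y\in\mathfrak{A}_0$. For $a,b\in\mathfrak{A}$ the weak product $a\,\square\, b$ is well defined if there is a (necessarily unique) $c\in\mathfrak{A}$ with $\varphi(bx,a^*y)=\varphi(cx,y)$ for all $x,y\in\mathfrak{A}_0$, $\varphi\in\mathcal{S}_{\mathfrak{A}_0}(\mathfrak{A})$; then $a\,\square\, b:=c$. A qu*-derivation is a linear map $\delta:\mathfrak{A}_0\to\mathfrak{A}$ with $\delta(x^* )=\delta(x)^*$ and $\delta(xy)=\delta(x)y+x\delta(y)$ for $x,y\in\mathfrak{A}_0$. It is closable if it is closable as a linear map from $\mathfrak{A}_0\subseteq\mathfrak{A}$ (norm of $\mathfrak{A}$) into $\mathfrak{A}$; its closure $\overline{\delta}$ has domain $\mathcal{D}(\overline{\delta})$ consisting of those $a\in\mathfrak{A}$ for which there exist $\{x_n\}\subset\mathfrak{A}_0$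 and $w\in\mathfrak{A}$ with $\|x_n-a\|\to0$ and $\|\delta(x_n)-w\|\to 0$, and $\overline{\delta}(a):=w$. *)

(* Defs.v *)
From mathcomp Require Import all_boot all_order all_algebra.
From mathcomp Require Import all_classical all_reals all_analysis.
From mathcomp Require Import complex.
Import Order.TTheory GRing.Theory Num.Theory numFieldNormedType.Exports.
Set Implicit Arguments. Unset Strict Implicit. Unset Printing Implicit Defensive.
Local Open Scope ring_scope.
Local Open Scope classical_set_scope.

(* A is a complex Banach space; A0 is a subset of A (the *-algebra);
   bq_lmul x a = x a  (meaningful for x in A0),
   bq_rmul a x = a x  (meaningful for x in A0),
   bq_star = the involution of A (extending the one of A0).
   The product of A0 is the restriction of the module multiplications. *)
Record BQalg (R : realType) := BQAlg {
  bqA :> completeNormedModType R[i];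
  bqA0 : set bqA;
  bq_star : bqA -> bqA;
  bq_lmul : bqA -> bqA -> bqA;
  bq_rmul : bqA -> bqA -> bqA;
  bqA0_0 : bqA0 0;
  bqA0_D : forall x y, bqA0 x -> bqA0 y -> bqA0 (x + y);
  bqA0_Z : forall (c : R[i]) x, bqA0 x -> bqA0 (c *: x);
  bqA0_M : forall x y, bqA0 x -> bqA0 y -> bqA0 (bq_lmul x y);
  bq_lmul_rmul : forall x y, bqA0 x -> bqA0 y -> bq_lmul x y = bq_rmul x y;
  bq_lmul_linr : forall (c : R[i]) x a b, bqA0 x ->
      bq_lmul x (c *: a + b) = c *: bq_lmul x a + bq_lmul x b;
  bq_lmul_linl : forall (c : R[i]) x y a, bqA0 x -> bqA0 y ->
      bq_lmul (c *: x + y) a = c *: bq_lmul x a + bq_lmul y a;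
  bq_rmul_linl : forall (c : R[i]) a b x, bqA0 x ->
      bq_rmul (c *: a + b) x = c *: bq_rmul a x + bq_rmul b x;
  bq_rmul_linr : forall (c : R[i]) a x y, bqA0 x -> bqA0 y ->
      bq_rmul a (c *: x + y) = c *: bq_rmul a x + bq_rmul a y;
  bq_assoc_ll : forall x y a, bqA0 x -> bqA0 y ->
      bq_lmul x (bq_lmul y a) = bq_lmul (bq_lmul x y) a;
  bq_assoc_rr : forall a x y, bqA0 x -> bqA0 y ->
      bq_rmul (bq_rmul a x) y = bq_rmul a (bq_lmul x y);
  bq_assoc_lr : forall x a y, bqA0 x -> bqA0 y ->
      bq_rmul (bq_lmul x a) y = bq_lmul x (bq_rmul a y);
  bq_starK : forall a, bq_star (bq_star a) = a;
  bq_star_antilin : forall (c : R[i]) a b,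
      bq_star (c *: a + b) = c^* *: bq_star a + bq_star b;
  bqA0_star : forall x, bqA0 x -> bqA0 (bq_star x);
  bq_star_rmul : forall a x, bqA0 x ->
      bq_star (bq_rmul a x) = bq_lmul (bq_star x) (bq_star a);
  bq_norm_star : forall a, `|bq_star a| = `|a|;
  bqA0_dense : closure bqA0 = setT;
  bq_rmul_cont : forall x, bqA0 x -> continuous (fun a => bq_rmul a x)
}.

Section Defs.
Context {R : realType} (X : BQalg R).
Local Notation A0 := (@bqA0 R X).
Local Notation rmul := (@bq_rmul R X).
Local Notation lmul := (@bq_lmul R X).
Local Notation star := (@bq_star R X).

Definition sesquilinear (phi : X -> X -> R[i]) :=
  (forall (c : R[i]) a b d, phi (c *: a + b) d = c * phi a d + phi b d) /\
  (forall (c : R[i]) a b d, phi a (c *: b + d) = c^* * phi a b + phi a d).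

Definition S_A0 (phi : X -> X -> R[i]) :=
  [/\ sesquilinear phi,
      (forall a, 0 <= phi a a),
      (forall a x y, A0 x -> A0 y -> phi (rmul a x) y = phi x (rmul (star a) y))
    & (forall a b, `|phi a b| <= `|a| * `|b|)].

Definition star_semisimple :=
  forall a : X, (forall phi, S_A0 phi -> phi a a = 0) -> a = 0.

(* tau_w: locally convex topology of the seminorms a |-> |phi(a x, y)| *)
Definition tauw_cauchy (u : nat -> X) :=
  forall phi x y, S_A0 phi -> A0 x -> A0 y ->
  forall e : R[i], 0 < e -> exists N : nat, forall m n : nat,
    (N <= m)%N -> (N <= n)%N -> `|phi (rmul (u n - u m) x) y| < e.

Definition tauw_cvg (u : nat -> X) (a : X) :=
  forall phi x y, S_A0 phi -> A0 x -> A0 y ->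
  forall e : R[i], 0 < e -> exists N : nat, forall n : nat,
    (N <= n)%N -> `|phi (rmul (u n - a) x) y| < e.

Definition tauw_seq_complete :=
  forall u : nat -> X, tauw_cauchy u -> exists a, tauw_cvg u a.

(* qu*-derivation delta : A0 -> A (given as a map on X; only its values on A0 matter) *)
Definition qu_derivation (delta : X -> X) :=
  [/\ (forall (c : R[i]) x y, A0 x -> A0 y ->
         delta (c *: x + y) = c *: delta x + delta y),
      (forall x, A0 x -> delta (star x) = star (delta x))
    & (forall x y, A0 x -> A0 y ->
         delta (lmul x y) = rmul (delta x) y + lmul x (delta y))].

Definition closable (delta : X -> X) :=
  forall (u : nat -> X) (w : X), (forall n, A0 (u n)) ->
    u n @[n --> \oo] --> (0 : X) -> delta (u n) @[n --> \oo] --> w -> w = 0.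

(* graph of the closure: a \in D(closure delta) and (closure delta) a = w *)
Definition closure_graph (delta : X -> X) (a w : X) :=
  exists u : nat -> X, (forall n, A0 (u n)) /\
    u n @[n --> \oo] --> a /\ delta (u n) @[n --> \oo] --> w.

Definition is_weak_prod (a b c : X) :=
  forall phi x y, S_A0 phi -> A0 x -> A0 y ->
    phi (rmul b x) (rmul (star a) y) = phi (rmul c x) y.

Definition weak_prod_defined (a b : X) := exists c, is_weak_prod a b c.

End Defs.

Arguments sesquilinear {R} X phi.
Arguments S_A0 {R} X phi.
Arguments star_semisimple {R} X.
Arguments tauw_cauchy {R} X u.
Arguments tauw_cvg {R} X u a.
Arguments tauw_seq_complete {R} X.
Arguments qu_derivation {R} X delta.
Arguments closable {R} X delta.
Arguments closure_graph {R} X delta a w.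
Arguments is_weak_prod {R} X a b c.
Arguments weak_prod_defined {R} X a b.

(* Main.v *)
Require Import Defs.
From mathcomp Require Import all_boot all_order all_algebra.
From mathcomp Require Import all_classical all_reals all_analysis.
From mathcomp Require Import complex.
From mathcomp Require Import ring.
Import Order.TTheory GRing.Theory Num.Theory numFieldNormedType.Exports.
Local Open Scope ring_scope.
Local Open Scope classical_set_scope.

Section Aux.
Context {R : realType}.

Lemma dom_cvg0 {T} {F : set_system T} {FF : Filter F}
  (V : normedModType R[i]) (f : T -> V) (g : T -> R[i]^o) :
  (forall t, `|f t| <= g t) -> g @ F --> (0:R[i]^o) -> f @ F --> (0:V).
Proof.
move=> H /cvgr0Pnorm_lt g0; apply/cvgr0Pnorm_lt => e e0.
near=> t; apply: le_lt_trans (H t) _.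
rewrite -(ger0_norm (le_trans (normr_ge0 _) (H t))).
by near: t; apply: g0.
Unshelve. all: by end_near. Qed.

Context (X : BQalg R).

Lemma phi_subl phi : S_A0 X phi -> forall a a' b, phi (a - a') b = phi a b - phi a' b.
Proof.
case=> [[H1 H2] _ _ _] a a' b.
by rewrite -scaleN1r addrC H1 mulN1r addrC.
Qed.

Lemma phi_subr phi : S_A0 X phi -> forall a b b', phi a (b - b') = phi a b - phi a b'.
Proof.
case=> [[H1 H2] _ _ _] a b b'.
by rewrite -scaleN1r addrC H2 conjCN1 mulN1r addrC.
Qed.

Lemma phi_addl phi : S_A0 X phi -> forall a a' b, phi (a + a') b = phi a b + phi a' b.
Proof.
case=> [[H1 H2] _ _ _] a a' b.
have := H1 1 a a' b; rewrite scale1r => ->; congr (_ + _); exact: mul1r.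
Qed.

Lemma phi_cvg phi {T} {F : set_system T} {FF : Filter F} (p q : T -> X) p0 q0 :
  S_A0 X phi -> p @ F --> p0 -> q @ F --> q0 ->
  (fun t => phi (p t) (q t) : R[i]^o) @ F --> (phi p0 q0 : R[i]^o).
Proof.
move=> Hphi Hp Hq.
have Hb := Hphi; case: Hb => _ _ _ Hb.
apply: ((@subr_cvg0 R[i] R[i]^o _ F FF (fun t => phi (p t) (q t)) (phi p0 q0)).1).
apply: (@dom_cvg0 T F FF R[i]^o _ (fun t => `|p t - p0| * `|q t| + `|p0| * `|q t - q0|)).
  move=> t.
  have -> : phi (p t) (q t) - phi p0 q0 = phi (p t - p0) (q t) + phi p0 (q t - q0).
    by rewrite phi_subl // phi_subr // addrA subrK.
  by apply: le_trans (ler_normD _ _) _; apply: lerD; apply: Hb.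
have hp := (@subr_cvg0 R[i] X T F FF p p0).2 Hp.
have hq := (@subr_cvg0 R[i] X T F FF q q0).2 Hq.
have np := @cvg_norm R[i] X T F FF _ _ hp.
have nq := @cvg_norm R[i] X T F FF _ _ Hq.
have nq' := @cvg_norm R[i] X T F FF _ _ hq.
rewrite normr0 in np nq'.
have m1 := @cvgM R[i] T F FF _ _ _ _ np nq.
have m2 := @cvgM R[i] T F FF _ _ _ _ (@cvg_cst R[i]^o `|p0| T F FF) nq'.
have s := @cvgD R[i] R[i]^o T F FF _ _ _ _ m1 m2.
rewrite mul0r mulr0 addr0 in s.
exact: s.
Qed.




Local Notation A0 := (@bqA0 R X).
Local Notation rmul := (@bq_rmul R X).
Local Notation lmul := (@bq_lmul R X).
Local Notation star := (@bq_star R X).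

Lemma star_sub (c d : X) : star (c - d) = star c - star d.
Proof.
have := bq_star_antilin (-1) d c.
by rewrite scaleN1r conjCN1 scaleN1r [- d + c]addrC => ->; rewrite addrC.
Qed.

Lemma star_cvg {T} {F : set_system T} {FF : Filter F} (f : T -> X) a :
  f @ F --> a -> (fun t => star (f t)) @ F --> star a.
Proof.
move=> Hf.
apply: ((@subr_cvg0 R[i] X T F FF (fun t => star (f t)) (star a)).1).
apply: (@dom_cvg0 T F FF X _ (fun t => `|f t - a|)).
  by move=> t; rewrite -star_sub bq_norm_star.
have hp := (@subr_cvg0 R[i] X T F FF f a).2 Hf.
have np := @cvg_norm R[i] X T F FF _ _ hp.
by rewrite normr0 in np.
Qed.

Lemma rmul_cvg {T} {F : set_system T} {FF : Filter F} (f : T -> X) a x :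
  A0 x -> f @ F --> a -> (fun t => rmul (f t) x) @ F --> rmul a x.
Proof.
move=> Hx Hf.
exact: (cvg_comp _ _ Hf (@bq_rmul_cont R X x Hx a)).
Qed.

Lemma lmul_star x c : A0 x -> lmul x c = star (rmul (star c) (star x)).
Proof.
move=> Hx; rewrite bq_star_rmul; last exact: bqA0_star.
by rewrite !bq_starK.
Qed.

Lemma lmul_cvg {T} {F : set_system T} {FF : Filter F} (f : T -> X) a x :
  A0 x -> f @ F --> a -> (fun t => lmul x (f t)) @ F --> lmul x a.
Proof.
move=> Hx Hf.
have -> : (fun t => lmul x (f t)) = (fun t => star (rmul (star (f t)) (star x))).
  by apply: funext => t; rewrite lmul_star.
rewrite lmul_star //.
apply: star_cvg; apply: rmul_cvg; first exact: bqA0_star.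
exact: star_cvg.
Qed.

Lemma phi_lmul phi x v c : S_A0 X phi -> A0 x -> A0 v ->
  phi (lmul x c) v = phi c (rmul (star x) v).
Proof.
move=> Hphi Hx Hv.
pose f c := phi (lmul x c) v - phi c (rmul (star x) v).
suff : f c = 0 by move/eqP; rewrite subr_eq0 => /eqP.
have f0 : forall c', A0 c' -> f c' = 0.
  move=> c' Hc'; rewrite /f bq_lmul_rmul //.
  by case: Hphi => _ _ H3 _; rewrite H3 // subrr.
have fc : (fun c' => f c' : R[i]^o) @ (nbhs c) --> (f c : R[i]^o).
  have h1 : (fun c' => phi (lmul x c') v : R[i]^o) @ nbhs c --> (phi (lmul x c) v : R[i]^o).
    apply: (@phi_cvg phi X (nbhs c) _ (fun c' => lmul x c') (fun _ => v) (lmul x c) v Hphi); last exact: cvg_cst.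
    apply: (@lmul_cvg X (nbhs c) _ id c x Hx). exact: cvg_refl.
  have h2 : (fun c' => phi c' (rmul (star x) v) : R[i]^o) @ nbhs c --> (phi c (rmul (star x) v) : R[i]^o).
    apply: (@phi_cvg phi X (nbhs c) _ id (fun _ => rmul (star x) v) c (rmul (star x) v) Hphi); last exact: cvg_cst.
    exact: cvg_refl.
  exact: (cvgB h1 h2).
have [//|Hne] := eqVneq (f c) 0.
have Hpos : 0 < `|f c| by rewrite normr_gt0.
have Hnb := cvgr_dist_lt _ _ fc _ Hpos. move: (Hnb (@nbhs_filter X c)) => {}Hnb.
have : closure A0 c by rewrite bqA0_dense.
move=> /(_ _ Hnb) [c' [Hc' /=]].
by rewrite (f0 c' Hc') subr0 ltxx.
Qed.

Lemma rmul_sub a b x : A0 x -> rmul (a - b) x = rmul a x - rmul b x.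
Proof.
move=> Hx; have := bq_rmul_linl (-1) b a Hx.
by rewrite !scaleN1r [- b + a]addrC => ->; rewrite addrC.
Qed.

Lemma rmul_add a b x : A0 x -> rmul (a + b) x = rmul a x + rmul b x.
Proof.
by move=> Hx; have := bq_rmul_linl 1 a b Hx; rewrite !scale1r.
Qed.

Lemma eps0 (z : R[i]) : (forall e : R[i], 0 < e -> `|z| < e) -> z = 0.
Proof.
move=> H; have [//|Hne] := eqVneq z 0.
have Hpos : 0 < `|z| by rewrite normr_gt0.
by have := H _ Hpos; rewrite ltxx.
Qed.
End Aux.

Theorem proposition3p2 (R : realType) (X : BQalg R) :
  star_semisimple X -> tauw_seq_complete X ->
  forall delta : X -> X, qu_derivation X delta -> closable X delta ->
  forall a b da db : X,
    closure_graph X delta a da -> closure_graph X delta b db ->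
    weak_prod_defined X a b ->
    exists dw : X,
      forall (phi : X -> X -> R[i]) (u v : X), S_A0 X phi -> @bqA0 R X u -> @bqA0 R X v ->
        phi (bq_rmul dw u) v =
        phi (bq_rmul b u) (bq_rmul (bq_star da) v) +
        phi (bq_rmul db u) (bq_rmul (bq_star a) v).
Proof.
move=> _ Hcompl delta [Dlin Dstar Dmul] _ a b da db [xs [Hxs [Hxa Hxd]]]
  [ys [Hys [Hyb Hyd]]] _.
pose z n := delta (bq_lmul (xs n) (ys n)).
pose L (phi : X -> X -> R[i]) u v := phi (bq_rmul b u) (bq_rmul (bq_star da) v) +
        phi (bq_rmul db u) (bq_rmul (bq_star a) v).
have key : forall phi u v, S_A0 X phi -> bqA0 u -> bqA0 v ->
    (phi (bq_rmul (z n) u) v : R[i]^o) @[n --> \oo] --> (L phi u v : R[i]^o).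
  move=> phi u v Hphi Hu Hv.
  have -> : (fun n => phi (bq_rmul (z n) u) v) = (fun n =>
     phi (bq_rmul (ys n) u) (bq_rmul (bq_star (delta (xs n))) v) +
     phi (bq_rmul (delta (ys n)) u) (bq_rmul (bq_star (xs n)) v)).
    apply: funext => n; rewrite /z Dmul // rmul_add // phi_addl //.
    congr (_ + _).
      rewrite bq_assoc_rr //.
      case: (Hphi) => _ _ H3 _; rewrite H3 //; last exact: bqA0_M.
      by rewrite bq_lmul_rmul.
    by rewrite bq_assoc_lr // phi_lmul.
  have h1 : (phi (bq_rmul (ys n) u) (bq_rmul (bq_star (delta (xs n))) v) : R[i]^o)
      @[n --> \oo] --> (phi (bq_rmul b u) (bq_rmul (bq_star da) v) : R[i]^o).
    apply: (@phi_cvg _ X phi nat \oo _ (fun n => bq_rmul (ys n) u)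
      (fun n => bq_rmul (bq_star (delta (xs n))) v) _ _ Hphi).
      exact: (@rmul_cvg _ X nat \oo _ ys b u Hu Hyb).
    apply: (@rmul_cvg _ X nat \oo _ (fun n => bq_star (delta (xs n))) _ v Hv).
    exact: (@star_cvg _ X nat \oo _ (fun n => delta (xs n)) da Hxd).
  have h2 : (phi (bq_rmul (delta (ys n)) u) (bq_rmul (bq_star (xs n)) v) : R[i]^o)
      @[n --> \oo] --> (phi (bq_rmul db u) (bq_rmul (bq_star a) v) : R[i]^o).
    apply: (@phi_cvg _ X phi nat \oo _ (fun n => bq_rmul (delta (ys n)) u)
      (fun n => bq_rmul (bq_star (xs n)) v) _ _ Hphi).
      exact: (@rmul_cvg _ X nat \oo _ (fun n => delta (ys n)) db u Hu Hyd).
    apply: (@rmul_cvg _ X nat \oo _ (fun n => bq_star (xs n)) _ v Hv).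
    exact: (@star_cvg _ X nat \oo _ xs a Hxa).
  exact: (cvgD h1 h2).
have Hcauchy : tauw_cauchy X z.
  move=> phi x y Hphi Hx Hy e e0.
  have e2 : 0 < e / 2 by rewrite divr_gt0 // ltr0n.
  have [N _ HN] := cvgr_dist_lt _ _ (key phi x y Hphi Hx Hy) _ e2.
  exists N => m n Hm Hn.
  rewrite rmul_sub // phi_subl //.
  have := HN m Hm; have := HN n Hn => /=.
  set gm := phi (bq_rmul (z m) x) y; set gn := phi (bq_rmul (z n) x) y.
  set l := L phi x y => Hn' Hm'.
  have -> : gn - gm = (l - gm) - (l - gn) by ring.
  apply: le_lt_trans (ler_normB _ _) _; rewrite [e]splitr; exact: ltrD.
have [dw Hdw] := Hcompl z Hcauchy.
exists dw => phi u v Hphi Hu Hv.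
apply/eqP; rewrite -subr_eq0; apply/eqP; apply: eps0 => e e0.
have e2 : 0 < e / 2 by rewrite divr_gt0 // ltr0n.
have [N1 _ H1] := cvgr_dist_lt _ _ (key phi u v Hphi Hu Hv) _ e2.
have [N2 H2] := Hdw phi u v Hphi Hu Hv _ e2.
have := H1 (maxn N1 N2) (leq_maxl _ _); have := H2 (maxn N1 N2) (leq_maxr _ _).
rewrite rmul_sub // phi_subl // => /=.
set g := phi (bq_rmul (z (maxn N1 N2)) u) v.
rewrite -/(L phi u v).
set l := L phi u v; set M := phi (bq_rmul dw u) v => HA HB.
have -> : M - l = - ((l - g) + (g - M)) by ring.
rewrite normrN; apply: le_lt_trans (ler_normD _ _) _; rewrite [e]splitr; exact: ltrD.
Qed.
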